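(* Let $r\ge1$, $n$ be integers and let $\sigma,\sigma':\mathbb{Z}_n\to\{0,1\}$ be a temporally periodic pair. Then for every block $[i,j]\in B(\sigma')$, each of the cell intervals $[i-r-1,j-r]$ and $[i+r,j+r+1]$ contains exactly one switch point of $\sigma$.
   Context: Cells are elements of $\mathbb{Z}_n$, arithmetic mod $n$; $[a,b]$ denotes the cyclic interval $a,\dots,b$. The majority rule with radius $r$: $\mathrm{maj}_r(\sigma)(i)=0$ if among the cells of $[i-r,i+r]$ strictly more have value $0$ than $1$ under $\sigma$, and $=1$ otherwise. A pair $\sigma,\sigma'$ is a temporally periodic pair if $\mathrm{maj}_r(\sigma)=\sigma'$ and $\mathrm{maj}_r(\sigma')=\sigma$. For $\beta\in\{0,1\}$, $B^\beta(\sigma)$ is the set of cell intervals $[i,j]$ with $\sigma(k)=\beta$ for all $k\in[i,j]$ and $\sigma(i-1)=\sigma(j+1)=1-\beta$; $B(\sigma)=B^0(\sigma)\cup B^1(\sigma)$. A switch point of $\sigma$ is a pair of consecutive cells $\ell,\ell+1$ with $\sigma(\ell)\ne\sigma(\ell+1)$; an interval contains the switch point if it contains both $\ell$ and $\ell+1$. *)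

(* Defs.v *)
(* Cells of Z_n are represented by integers; a configuration
   sigma : Z_n -> {0,1} is represented as an n-periodic function Z -> bool
   (false = 0, true = 1). *)
From Stdlib Require Import ZArith List Bool.
Import ListNotations.
Open Scope Z_scope.

Definition periodic (n : nat) (s : Z -> bool) : Prop :=
  forall k : Z, s (k + Z.of_nat n) = s k.

Definition zrange (a : Z) (len : nat) : list Z :=
  map (fun t => a + Z.of_nat t) (seq 0 len).

Definition zeros_in (s : Z -> bool) (r : nat) (i : Z) : nat :=
  length (filter (fun k => negb (s k)) (zrange (i - Z.of_nat r) (2 * r + 1))).
Definition ones_in (s : Z -> bool) (r : nat) (i : Z) : nat :=
  length (filter (fun k => s k) (zrange (i - Z.of_nat r) (2 * r + 1))).

Definition maj (r : nat) (s : Z -> bool) (i : Z) : bool :=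
  negb (Nat.ltb (ones_in s r i) (zeros_in s r i)).

Definition temporally_periodic_pair (r : nat) (s s' : Z -> bool) : Prop :=
  (forall i, maj r s i = s' i) /\ (forall i, maj r s' i = s i).

(* [i, j] (cyclic interval i, ..., j, represented with i <= j < i + n)
   is a maximal block of value b of s *)
Definition is_block (n : nat) (s : Z -> bool) (b : bool) (i j : Z) : Prop :=
  i <= j < i + Z.of_nat n /\
  (forall k, i <= k <= j -> s k = b) /\
  s (i - 1) = negb b /\ s (j + 1) = negb b.

Definition in_B (n : nat) (s : Z -> bool) (i j : Z) : Prop :=
  exists b : bool, is_block n s b i j.

(* number of switch points l, l+1 of s contained in the cell interval [a, b],
   i.e. a <= l and l + 1 <= b *)
Definition switch_count (s : Z -> bool) (a b : Z) : nat :=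
  length (filter (fun l => negb (Bool.eqb (s l) (s (l + 1))))
                 (zrange a (Z.to_nat (b - a)))).

(* Main.v *)
Require Import Defs.
From Stdlib Require Import ZArith List Bool.
From Stdlib Require Import Lia.
Import ListNotations.
Open Scope Z_scope.

Lemma zrange_S_l a L : zrange a (S L) = a :: zrange (a + 1) L.
Proof.
  unfold zrange. simpl. f_equal; [lia|].
  rewrite <- seq_shift, map_map. apply map_ext. intro t. lia.
Qed.

Lemma zrange_S_r a L : zrange a (S L) = zrange a L ++ [a + Z.of_nat L].
Proof.
  unfold zrange. rewrite seq_S, map_app. reflexivity.
Qed.

Definition cntf (f : Z -> bool) a L := length (filter f (zrange a L)).

Lemma cnt_l f a L : cntf f a (S L) = ((if f a then 1 else 0) + cntf f (a+1)%Z L)%nat.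
Proof. unfold cntf. rewrite zrange_S_l. simpl. destruct (f a); reflexivity. Qed.

Lemma cnt_r f a L : cntf f a (S L) = (cntf f a L + if f (a + Z.of_nat L)%Z then 1 else 0)%nat.
Proof.
  unfold cntf. rewrite zrange_S_r, filter_app, length_app. simpl.
  destruct (f (a + Z.of_nat L)); reflexivity.
Qed.

Lemma cnt_compl f a L : (cntf f a L + cntf (fun x => negb (f x)) a L)%nat = L.
Proof.
  revert a. induction L; intro a; [reflexivity|].
  rewrite !cnt_l. specialize (IHL (a+1)). destruct (f a); simpl; lia.
Qed.

Definition C (s : Z -> bool) (b : bool) (r : nat) (k : Z) :=
  cntf (fun x => Bool.eqb (s x) b) (k - Z.of_nat r) (2*r+1).

Lemma maj_iff r s b k : maj r s k = b <-> (r+1 <= C s b r k)%nat.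
Proof.
  unfold maj, ones_in, zeros_in, C.
  pose proof (cnt_compl s (k - Z.of_nat r) (2*r+1)) as H. unfold cntf in *.
  change (fun k0 => s k0) with s.
  set (l := zrange (k - Z.of_nat r) (2 * r + 1)) in *.
  set (O := length (filter s l)) in *.
  set (Zc := length (filter (fun x => negb (s x)) l)) in *.
  destruct b.
  - rewrite (filter_ext (fun x => Bool.eqb (s x) true) s) by (intro x; destruct (s x); reflexivity).
    fold O.
    destruct (Nat.ltb_spec O Zc); simpl; split; intro; try discriminate; try lia; reflexivity.
  - rewrite (filter_ext (fun x => Bool.eqb (s x) false) (fun x => negb (s x)))
      by (intro x; destruct (s x); reflexivity).
    fold Zc.
    destruct (Nat.ltb_spec O Zc); simpl; split; intro; try discriminate; try lia; reflexivity.
Qed.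

Definition ind (s : Z -> bool) b x : nat := if Bool.eqb (s x) b then 1%nat else 0%nat.

Lemma C_step s b r k :
  (C s b r (k+1) + ind s b (k - Z.of_nat r) = C s b r k + ind s b (k + Z.of_nat r + 1))%nat.
Proof.
  unfold C, ind.
  pose proof (cnt_l (fun x => Bool.eqb (s x) b) (k - Z.of_nat r) (2*r+1)) as H1.
  pose proof (cnt_r (fun x => Bool.eqb (s x) b) (k - Z.of_nat r) (2*r+1)) as H2.
  replace (k - Z.of_nat r + 1) with (k + 1 - Z.of_nat r) in H1 by lia.
  replace (k - Z.of_nat r + Z.of_nat (2 * r + 1)) with (k + Z.of_nat r + 1) in H2 by lia.
  lia.
Qed.

Lemma ind_le s b x : (ind s b x <= 1)%nat.
Proof. unfold ind. destruct (Bool.eqb _ _); lia. Qed.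

Lemma ind_b s b x : s x = b -> ind s b x = 1%nat.
Proof. intro H. unfold ind. rewrite H. destruct b; reflexivity. Qed.

Lemma ind_0 s b x : ind s b x = 0%nat -> s x = negb b.
Proof. unfold ind. destruct (s x), b; simpl; congruence. Qed.

Lemma ind_1 s b x : ind s b x = 1%nat -> s x = b.
Proof. unfold ind. destruct (s x), b; simpl; congruence. Qed.

Lemma mono_up_nat s b r y d :
  (forall t, (t < d)%nat -> s (y + Z.of_nat t + Z.of_nat r + 1) = b) ->
  (C s b r y <= C s b r (y + Z.of_nat d))%nat.
Proof.
  induction d; intro H.
  - rewrite Z.add_0_r. lia.
  - pose proof (C_step s b r (y + Z.of_nat d)) as E.
    rewrite (ind_b s b (y + Z.of_nat d + Z.of_nat r + 1)) in E by (apply H; lia).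
    pose proof (ind_le s b (y + Z.of_nat d - Z.of_nat r)).
    replace (y + Z.of_nat (S d)) with (y + Z.of_nat d + 1) by lia.
    assert (C s b r y <= C s b r (y + Z.of_nat d))%nat by (apply IHd; intros; apply H; lia).
    lia.
Qed.

Lemma mono_dn_nat s b r y d :
  (forall t, (t < d)%nat -> s (y + Z.of_nat t - Z.of_nat r) = b) ->
  (C s b r (y + Z.of_nat d) <= C s b r y)%nat.
Proof.
  induction d; intro H.
  - rewrite Z.add_0_r. lia.
  - pose proof (C_step s b r (y + Z.of_nat d)) as E.
    rewrite (ind_b s b (y + Z.of_nat d - Z.of_nat r)) in E by (apply H; lia).
    pose proof (ind_le s b (y + Z.of_nat d + Z.of_nat r + 1)).
    replace (y + Z.of_nat (S d)) with (y + Z.of_nat d + 1) by lia.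
    assert (C s b r (y + Z.of_nat d) <= C s b r y)%nat by (apply IHd; intros; apply H; lia).
    lia.
Qed.

Lemma mono_up s b r y z : y <= z ->
  (forall x, y + Z.of_nat r + 1 <= x <= z + Z.of_nat r -> s x = b) ->
  (C s b r y <= C s b r z)%nat.
Proof.
  intros Hyz H.
  replace z with (y + Z.of_nat (Z.to_nat (z - y))) by lia.
  apply mono_up_nat. intros t Ht. apply H. lia.
Qed.

Lemma mono_dn s b r y z : y <= z ->
  (forall x, y - Z.of_nat r <= x <= z - Z.of_nat r - 1 -> s x = b) ->
  (C s b r z <= C s b r y)%nat.
Proof.
  intros Hyz H.
  replace z with (y + Z.of_nat (Z.to_nat (z - y))) by lia.
  apply mono_dn_nat. intros t Ht. apply H. lia.
Qed.

Definition swf (s : Z -> bool) := fun l => negb (Bool.eqb (s l) (s (l + 1))).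

Lemma sw_zero s c a L :
  (forall x, a <= x <= a + Z.of_nat L -> s x = c) ->
  length (filter (swf s) (zrange a L)) = 0%nat.
Proof.
  revert a. induction L; intros a H; [reflexivity|].
  rewrite zrange_S_l. simpl.
  unfold swf at 1. rewrite (H a) by lia. rewrite (H (a+1)) by lia.
  rewrite eqb_reflx. simpl. apply IHL. intros; apply H; lia.
Qed.

Lemma sw_one s c a L :
  s a = negb c -> s (a + Z.of_nat L) = c ->
  (forall x y, a <= x <= y -> y <= a + Z.of_nat L -> s x = c -> s y = c) ->
  length (filter (swf s) (zrange a L)) = 1%nat.
Proof.
  revert a. induction L; intros a Ha HL Hm.
  - rewrite Z.add_0_r in HL. rewrite HL in Ha. destruct c; discriminate.
  - rewrite zrange_S_l. simpl. unfold swf at 1.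
    destruct (Bool.bool_dec (s (a+1)) c) as [E|E].
    + rewrite Ha, E. replace (negb (Bool.eqb (negb c) c)) with true by (destruct c; reflexivity).
      simpl. f_equal. apply (sw_zero s c). intros x Hx. apply (Hm (a+1)); try lia; auto.
    + assert (E' : s (a+1) = negb c) by (destruct (s (a+1)), c; simpl in *; congruence).
      rewrite Ha, E', eqb_reflx. simpl. apply IHL; auto.
      * rewrite <- HL. f_equal. lia.
      * intros x y Hx Hy. apply Hm; lia.
Qed.

Theorem claim7 (r n : nat) (s s' : Z -> bool) :
  (1 <= r)%nat -> (0 < n)%nat ->
  periodic n s -> periodic n s' ->
  temporally_periodic_pair r s s' ->
  forall i j : Z, in_B n s' i j ->
    switch_count s (i - Z.of_nat r - 1) (j - Z.of_nat r) = 1%nat /\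
    switch_count s (i + Z.of_nat r) (j + Z.of_nat r + 1) = 1%nat.
Proof.
  intros Hr Hn Ps Ps' [H1 H2] i j [b [[Hij Hlt] [Hin [Hl Hrr]]]].
  assert (Ci1 : (C s b r (i - 1) < r + 1)%nat).
  { destruct (Nat.lt_ge_cases (C s b r (i - 1)) (r+1)) as [h|h]; auto.
    apply maj_iff in h. rewrite H1, Hl in h. destruct b; discriminate. }
  assert (Ci : (r + 1 <= C s b r i)%nat).
  { apply maj_iff. rewrite H1. apply Hin. lia. }
  assert (Cj : (r + 1 <= C s b r j)%nat).
  { apply maj_iff. rewrite H1. apply Hin. lia. }
  assert (Cj1 : (C s b r (j + 1) < r + 1)%nat).
  { destruct (Nat.lt_ge_cases (C s b r (j + 1)) (r+1)) as [h|h]; auto.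
    apply maj_iff in h. rewrite H1, Hrr in h. destruct b; discriminate. }
  pose proof (C_step s b r (i - 1)) as Ei.
  replace (i - 1 + 1) with i in Ei by lia.
  pose proof (C_step s b r j) as Ej.
  pose proof (ind_le s b (i - 1 - Z.of_nat r)).
  pose proof (ind_le s b (i - 1 + Z.of_nat r + 1)).
  pose proof (ind_le s b (j - Z.of_nat r)).
  pose proof (ind_le s b (j + Z.of_nat r + 1)).
  assert (F1 : s (i - Z.of_nat r - 1) = negb b).
  { apply ind_0. replace (i - Z.of_nat r - 1) with (i - 1 - Z.of_nat r) by lia. lia. }
  assert (F3 : s (i + Z.of_nat r) = b).
  { apply ind_1. replace (i + Z.of_nat r) with (i - 1 + Z.of_nat r + 1) by lia. lia. }
  assert (F2 : s (j - Z.of_nat r) = b). { apply ind_1. lia. }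
  assert (F4 : s (j + Z.of_nat r + 1) = negb b). { apply ind_0. lia. }
  assert (M1 : forall y z, i - Z.of_nat r - 1 <= y <= z -> z <= j - Z.of_nat r -> s y = b -> s z = b).
  { intros y z Hy Hz Hs. rewrite <- H2. apply maj_iff.
    rewrite <- H2 in Hs. apply maj_iff in Hs.
    eapply Nat.le_trans; [exact Hs|]. apply mono_up; [lia|].
    intros x Hx. apply Hin. lia. }
  assert (M2 : forall y z, i + Z.of_nat r <= y <= z -> z <= j + Z.of_nat r + 1 -> s z = b -> s y = b).
  { intros y z Hy Hz Hs. rewrite <- H2. apply maj_iff.
    rewrite <- H2 in Hs. apply maj_iff in Hs.
    eapply Nat.le_trans; [exact Hs|]. apply mono_dn; [lia|].
    intros x Hx. apply Hin. lia. }
  unfold switch_count. split.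
  - apply (sw_one s b); auto.
    + rewrite Z2Nat.id by lia. replace (i - Z.of_nat r - 1 + (j - Z.of_nat r - (i - Z.of_nat r - 1))) with (j - Z.of_nat r) by lia. auto.
    + intros x y Hx Hy. apply M1; rewrite ?Z2Nat.id in Hy by lia; lia.
  - apply (sw_one s (negb b)); auto.
    + rewrite negb_involutive. auto.
    + rewrite Z2Nat.id by lia. replace (i + Z.of_nat r + (j + Z.of_nat r + 1 - (i + Z.of_nat r))) with (j + Z.of_nat r + 1) by lia. auto.
    + intros x y Hx Hy Hsx. rewrite Z2Nat.id in Hy by lia.
      destruct (Bool.bool_dec (s y) b) as [E|E].
      * assert (Hxb : s x = b) by (apply (M2 x y); auto; lia).
        rewrite Hxb in Hsx. destruct b; discriminate.
      * destruct (s y), b; simpl in *; congruence.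
Qed.
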